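(* In any execution of $\mathcal{U}$, for every operation $o$: if $h(o) = (t(o), NULL)$ at time $T$ and $o$ is not done at time $T' \geq T$, then $h(o) = (t(o), NULL)$ throughout the interval $[T, T']$.
   Context: Model: an asynchronous shared-memory system with possibly infinitely many processes, any of which may crash, communicating via atomic shared objects. A fetch-and-increment (F\&I) object stores an integer; F\&I$(C)$ atomically returns the current value and increments it. A generalized-compare-and-swap (GCAS) object $O$ stores a value and supports Read$(O)$ and GCAS$(c, O, v_1, v_2)$, which atomically does: if $c(\text{current value of } O, v_1)$ holds then set $O := v_2$ and return true, else return false. Tuples are compared componentwise for $=$; GCAS$(>, A, (t,-,-), v)$ succeeds iff the time field of $A$ is strictly greater than $t$. Implemented type $\mathcal{T} = (OP, RES, Q, \delta)$ with initial state $s_0$; a procedure $apply_{\mathcal{T}}(o,s)$ returns some $(s',r)$ with $(s,o,s',r)\in\delta$. $NULL$ is a value different from every response of $\mathcal{T}$, and $NOOP$ is a name different from every operation of $\mathcal{T}$. Algorithm $\mathcal{U}$: each process $p$ owns a GCAS object $H_p$ with fields $(time, response)$. Shared objects: F\&I object $C$, initially $1$; GCAS object $A$ with fields $(time, op, ptr)$, initially $(0, NOOP, h(NOOP))$, where $h(NOOP)$ is a pointer to an immutable location containing $(0,\perp)$; GCAS object $S$ with fields $(time, state, response, ptr)$, initially $(0, s_0, \perp, h(NOOP))$. Process $p$ performs operation $o$ by calling DoOp$(o)$: (1) DoOp$(o)$ invoked; (2) $t := $ F\&I$(C)$; (3) $H_p := (t, NULL)$; (4) while $H_p = (t, NULL)$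 do: (5) $(t^*, s^*, r^*, roptr^* ) := S$; (6) GCAS$(=, *roptr^*, (t^*, NULL), (t^*, r^* ))$; (7) GCAS$(>, A, (t,-,-), (t, o, \&H_p))$; (8) $(t', o', roptr') := A$; (9) $(\hat t, \hat r) := *roptr'$; (10) if $(\hat t,\hat r) = (t', NULL)$ then (11) $(s', r') := apply_{\mathcal{T}}(o', s^* )$; (12) GCAS$(=, S, (t^*,s^*,r^*,roptr^* ), (t', s', r', roptr'))$; (13) else GCAS$(=, A, (t', o', roptr'), (t, o, \&H_p))$; end while; (14) return $H_p.response$. Notation: an ''operation'' $o$ means one invocation of DoOp$(o)$. $p(o)$ is the process executing it; $t(o)$ is the value returned by its F\&I at line 2, or $\infty$ if line 2 has not been executed; $h(o)$ is $H_{p(o)}$. Operation $o$ is done at time $T$ if at some time $T'\le T$, $h(o) = (t(o), r)$ with $r \neq NULL$. *)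

(* Defs.v *)
(* Operational model of algorithm U (asynchronous interleaving
   semantics, every shared-memory access is one atomic step). *)
From Stdlib Require Import Arith.
Set Implicit Arguments.

Section AlgorithmU.
(* P : process identifiers (possibly infinitely many);
   OP, RES, Q : operations, responses and states of the implemented type T;
   s0 : initial state;  apply : the procedure apply_T. *)
Variables (P OP RES Q : Type) (s0 : Q) (apply : OP -> Q -> Q * RES).

Inductive Val := VNull | VBot | VRes (r : RES).

(* Pointers: either h(NOOP) (immutable location containing (0, bottom)) or &H_q. *)
Inductive Ptr := PNoop | PH (q : P).

(* Program counter: Idle = between operations; Lk = about to execute line k. *)
Inductive PC := Idle | L2 | L3 | L4 | L5 | L6 | L7 | L8 | L9 | L10 | L11 | L12 | L13 | L14.

(* Local state of a process.  lop : operation of the current DoOp (None = NOOP,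
   only before the first invocation); idx : index of the current (or next)
   invocation of DoOp by this process; lt : t;  rdS : (t*, s*, r*, roptr* ) ;
   rdA : (t', o', roptr');  rdR : (t^, r^);  app : (s', r'). *)
Record Local := mkLocal {
  pc : PC;
  idx : nat;
  lop : option OP;
  lt : nat;
  rdS : nat * Q * Val * Ptr;
  rdA : nat * option OP * Ptr;
  rdR : nat * Val;
  app : Q * Val }.

(* Shared memory: C, A = (time, op, ptr) with op None = NOOP,
   S = (time, state, response, ptr), H_p for each process p, plus locals. *)
Record Config := mkConfig {
  cC : nat;
  cA : nat * option OP * Ptr;
  cS : nat * Q * Val * Ptr;
  cH : P -> nat * Val;
  cL : P -> Local }.

Definition deref (c : Config) (x : Ptr) : nat * Val :=
  match x with PNoop => (0, VBot) | PH q => cH c q end.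

Definition init (c : Config) : Prop :=
  cC c = 1 /\ cA c = (0, None, PNoop) /\ cS c = (0, s0, VBot, PNoop) /\
  (forall p, cH c p = (0, VBot)) /\
  (forall p, pc (cL c p) = Idle /\ idx (cL c p) = 0).

Definition updH (H : P -> nat * Val) (q : P) (v : nat * Val) (H' : P -> nat * Val) :=
  H' q = v /\ forall x, x <> q -> H' x = H x.

Definition sameC (c c' : Config) := cC c' = cC c.
Definition sameA (c c' : Config) := cA c' = cA c.
Definition sameS (c c' : Config) := cS c' = cS c.
Definition sameH (c c' : Config) := cH c' = cH c.

Definition apply_step (o : option OP) (s : Q) : Q * Val :=
  match o with
  | Some o => let (s', r) := apply o s in (s', VRes r)
  | None => (s, VBot) (* never used: A never holds NOOP with a NULL-marked pointer *)
  end.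

Definition step (p : P) (c c' : Config) : Prop :=
  let l := cL c p in
  let l' := cL c' p in
  (forall q, q <> p -> cL c' q = cL c q) /\
  match pc l with
  | Idle => (* (1) invocation of DoOp(o), for an arbitrary o *)
      (exists o, l' = mkLocal L2 (idx l) (Some o) (lt l) (rdS l) (rdA l) (rdR l) (app l))
      /\ sameC c c' /\ sameA c c' /\ sameS c c' /\ sameH c c'
  | L2 => (* t := F&I(C) *)
      l' = mkLocal L3 (idx l) (lop l) (cC c) (rdS l) (rdA l) (rdR l) (app l)
      /\ cC c' = cC c + 1 /\ sameA c c' /\ sameS c c' /\ sameH c c'
  | L3 => (* H_p := (t, NULL) *)
      l' = mkLocal L4 (idx l) (lop l) (lt l) (rdS l) (rdA l) (rdR l) (app l)
      /\ updH (cH c) p (lt l, VNull) (cH c')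
      /\ sameC c c' /\ sameA c c' /\ sameS c c'
  | L4 => (* while H_p = (t, NULL) *)
      (cH c p = (lt l, VNull) ->
         l' = mkLocal L5 (idx l) (lop l) (lt l) (rdS l) (rdA l) (rdR l) (app l))
      /\ (cH c p <> (lt l, VNull) ->
         l' = mkLocal L14 (idx l) (lop l) (lt l) (rdS l) (rdA l) (rdR l) (app l))
      /\ sameC c c' /\ sameA c c' /\ sameS c c' /\ sameH c c'
  | L5 => (* (t*, s*, r*, roptr* ) := S *)
      l' = mkLocal L6 (idx l) (lop l) (lt l) (cS c) (rdA l) (rdR l) (app l)
      /\ sameC c c' /\ sameA c c' /\ sameS c c' /\ sameH c c'
  | L6 => (* GCAS(=, *roptr*, (t*, NULL), (t*, r* )) *)
      l' = mkLocal L7 (idx l) (lop l) (lt l) (rdS l) (rdA l) (rdR l) (app l)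
      /\ sameC c c' /\ sameA c c' /\ sameS c c'
      /\ (let '(ts, _, rs, rp) := rdS l in
          match rp with
          | PNoop => sameH c c'  (* h(NOOP) is immutable and holds (0, bottom) *)
          | PH q => (cH c q = (ts, VNull) /\ updH (cH c) q (ts, rs) (cH c'))
                    \/ (cH c q <> (ts, VNull) /\ sameH c c')
          end)
  | L7 => (* GCAS(>, A, (t,-,-), (t, o, &H_p)) *)
      l' = mkLocal L8 (idx l) (lop l) (lt l) (rdS l) (rdA l) (rdR l) (app l)
      /\ sameC c c' /\ sameS c c' /\ sameH c c'
      /\ ((lt l < fst (fst (cA c)) /\ cA c' = (lt l, lop l, PH p))
          \/ (~ lt l < fst (fst (cA c)) /\ sameA c c'))
  | L8 => (* (t', o', roptr') := A *)
      l' = mkLocal L9 (idx l) (lop l) (lt l) (rdS l) (cA c) (rdR l) (app l)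
      /\ sameC c c' /\ sameA c c' /\ sameS c c' /\ sameH c c'
  | L9 => (* (t^, r^) := *roptr' *)
      l' = mkLocal L10 (idx l) (lop l) (lt l) (rdS l) (rdA l) (deref c (snd (rdA l))) (app l)
      /\ sameC c c' /\ sameA c c' /\ sameS c c' /\ sameH c c'
  | L10 => (* if (t^, r^) = (t', NULL) *)
      (rdR l = (fst (fst (rdA l)), VNull) ->
         l' = mkLocal L11 (idx l) (lop l) (lt l) (rdS l) (rdA l) (rdR l) (app l))
      /\ (rdR l <> (fst (fst (rdA l)), VNull) ->
         l' = mkLocal L13 (idx l) (lop l) (lt l) (rdS l) (rdA l) (rdR l) (app l))
      /\ sameC c c' /\ sameA c c' /\ sameS c c' /\ sameH c c'
  | L11 => (* (s', r') := apply_T(o', s* ) *)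
      l' = mkLocal L12 (idx l) (lop l) (lt l) (rdS l) (rdA l) (rdR l)
             (apply_step (snd (fst (rdA l))) (snd (fst (fst (rdS l)))))
      /\ sameC c c' /\ sameA c c' /\ sameS c c' /\ sameH c c'
  | L12 => (* GCAS(=, S, (t*, s*, r*, roptr* ), (t', s', r', roptr')) *)
      l' = mkLocal L4 (idx l) (lop l) (lt l) (rdS l) (rdA l) (rdR l) (app l)
      /\ sameC c c' /\ sameA c c' /\ sameH c c'
      /\ ((cS c = rdS l /\
             cS c' = (fst (fst (rdA l)), fst (app l), snd (app l), snd (rdA l)))
          \/ (cS c <> rdS l /\ sameS c c'))
  | L13 => (* GCAS(=, A, (t', o', roptr'), (t, o, &H_p)) *)
      l' = mkLocal L4 (idx l) (lop l) (lt l) (rdS l) (rdA l) (rdR l) (app l)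
      /\ sameC c c' /\ sameS c c' /\ sameH c c'
      /\ ((cA c = rdA l /\ cA c' = (lt l, lop l, PH p))
          \/ (cA c <> rdA l /\ sameA c c'))
  | L14 => (* return H_p.response; the operation completes *)
      l' = mkLocal Idle (S (idx l)) (lop l) (lt l) (rdS l) (rdA l) (rdR l) (app l)
      /\ sameC c c' /\ sameA c c' /\ sameS c c' /\ sameH c c'
  end.

(* An execution: configurations ex i at times i = 0,1,2,..., where between
   times i and i+1 either process p takes one step (lab i = Some p) or nothing
   happens (lab i = None; this covers finite executions and crashed processes). *)
Definition execution (ex : nat -> Config) (lab : nat -> option P) : Prop :=
  init (ex 0) /\
  forall i, match lab i with
            | None => ex (S i) = ex i
            | Some p => step p (ex i) (ex (S i))
            end.

(* Operations are identified by (p, k): the k-th invocation of DoOp by p.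
   tval ex lab p k v : t(o) = v, i.e. the F&I of line 2 of o returned v.
   If no such v exists, t(o) = infinity. *)
Definition tval (ex : nat -> Config) (lab : nat -> option P) (p : P) (k v : nat) : Prop :=
  exists i, lab i = Some p /\ pc (cL (ex i) p) = L2 /\ idx (cL (ex i) p) = k
            /\ cC (ex i) = v.

Definition done (ex : nat -> Config) (lab : nat -> option P) (p : P) (k T : nat) : Prop :=
  exists v, tval ex lab p k v /\
  exists T0 r, T0 <= T /\ cH (ex T0) p = (v, r) /\ r <> VNull.

End AlgorithmU.

(* Main.v *)
Require Import Defs.
From Stdlib Require Import Arith Lia Classical.

Section Proof.
Variables (P OP RES Q : Type) (s0 : Q) (apply : OP -> Q -> Q * RES).

Definition JH (c : Config P OP RES Q) (r : P) : Prop :=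
  match pc (cL c r) with
  | Idle | L2 | L3 | L14 => snd (cH c r) <> VNull RES
  | _ => fst (cH c r) = lt (cL c r)
  end.

Definition Inv (c : Config P OP RES Q) : Prop :=
  snd (fst (cS c)) <> VNull RES /\
  (forall r, pc (cL c r) = L6 -> snd (fst (rdS (cL c r))) <> VNull RES) /\
  (forall r, pc (cL c r) = L12 -> snd (app (cL c r)) <> VNull RES) /\
  (forall r, JH c r).

Ltac j5 Hl :=
  let r := fresh "r" in let n := fresh "n" in
  intros r; match goal with Hr : forall r, r <> ?q -> _ |- _ =>
  destruct (classic (r = q)) as [->|n];
  [rewrite Hl; simpl; discriminate | rewrite (Hr r n); auto] end.

Lemma inv_step q c c' : Inv c -> step apply q c c' -> Inv c'.
Proof.
  intros [J1 [J2 [J5 J3]]] [Hoth Hst].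
  cbv zeta in Hst.
  assert (Hr : forall r, r <> q -> cL c' r = cL c r) by exact Hoth.
  destruct (pc (cL c q)) eqn:E;
  unfold sameC, sameA, sameS, sameH in Hst.
  - destruct Hst as [[o Hl] [_ [_ [HS HH]]]].
    split; [rewrite HS; exact J1|]. split; [|split; [j5 Hl|]].
    + intros r. destruct (classic (r = q)) as [->|n].
      * rewrite Hl; simpl; discriminate.
      * rewrite (Hr r n). apply J2.
    + intros r. unfold JH. rewrite HH. destruct (classic (r = q)) as [->|n].
      * rewrite Hl; simpl. specialize (J3 q). unfold JH in J3. rewrite E in J3. exact J3.
      * rewrite (Hr r n). apply J3.
  - destruct Hst as [Hl [_ [_ [HS HH]]]].
    split; [rewrite HS; exact J1|]. split; [|split; [j5 Hl|]].
    + intros r. destruct (classic (r = q)) as [->|n].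
      * rewrite Hl; simpl; discriminate.
      * rewrite (Hr r n). apply J2.
    + intros r. unfold JH. rewrite HH. destruct (classic (r = q)) as [->|n].
      * rewrite Hl; simpl. specialize (J3 q). unfold JH in J3. rewrite E in J3. exact J3.
      * rewrite (Hr r n). apply J3.
  - destruct Hst as [Hl [[HHq HHo] [_ [_ HS]]]].
    split; [rewrite HS; exact J1|]. split; [|split; [j5 Hl|]].
    + intros r. destruct (classic (r = q)) as [->|n].
      * rewrite Hl; simpl; discriminate.
      * rewrite (Hr r n). apply J2.
    + intros r. unfold JH. destruct (classic (r = q)) as [->|n].
      * rewrite Hl, HHq; simpl. reflexivity.
      * rewrite (Hr r n), (HHo r n). apply J3.
  -
    destruct Hst as [H1 [H2 [_ [_ [HS HH]]]]].
    split; [rewrite HS; exact J1|].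
    assert (JQ := J3 q). unfold JH in JQ. rewrite E in JQ.
    destruct (classic (cH c q = (lt (cL c q), VNull RES))) as [e|ne].
    + specialize (H1 e). split; [|split; [j5 H1|]].
      * intros r. destruct (classic (r = q)) as [->|n].
        -- rewrite H1; simpl; discriminate.
        -- rewrite (Hr r n). apply J2.
      * intros r. unfold JH. rewrite HH. destruct (classic (r = q)) as [->|n].
        -- rewrite H1; simpl. exact JQ.
        -- rewrite (Hr r n). apply J3.
    + specialize (H2 ne). split; [|split; [j5 H2|]].
      * intros r. destruct (classic (r = q)) as [->|n].
        -- rewrite H2; simpl; discriminate.
        -- rewrite (Hr r n). apply J2.
      * intros r. unfold JH. rewrite HH. destruct (classic (r = q)) as [->|n].
        -- rewrite H2; simpl. intro X. apply ne.
           destruct (cH c q) as [a b]; simpl in *. subst. reflexivity.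
        -- rewrite (Hr r n). apply J3.
  -
    destruct Hst as [Hl [_ [_ [HS HH]]]].
    split; [rewrite HS; exact J1|]. split; [|split; [j5 Hl|]].
    + intros r. destruct (classic (r = q)) as [->|n].
      * rewrite Hl; simpl. intros _. exact J1.
      * rewrite (Hr r n). apply J2.
    + intros r. unfold JH. rewrite HH. destruct (classic (r = q)) as [->|n].
      * rewrite Hl; simpl. specialize (J3 q). unfold JH in J3. rewrite E in J3. exact J3.
      * rewrite (Hr r n). apply J3.
  -
    destruct Hst as [Hl [_ [_ [HS HHx]]]].
    split; [rewrite HS; exact J1|]. split; [|split; [j5 Hl|]].
    + intros r. destruct (classic (r = q)) as [->|n].
      * rewrite Hl; simpl; discriminate.
      * rewrite (Hr r n). apply J2.
    + assert (HH : forall r, cH c' r = cH c r \/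
                (cH c r = (fst (cH c r), VNull RES) /\ fst (cH c' r) = fst (cH c r))).
      { intros r. destruct (rdS (cL c q)) as [[[ts s] rs] rp].
        destruct rp as [|x].
        - left. rewrite HHx. reflexivity.
        - destruct HHx as [[e [u1 u2]]|[_ e]].
          + destruct (classic (r = x)) as [->|n].
            * right. rewrite e, u1. simpl. auto.
            * left. apply u2; exact n.
          + left. rewrite e. reflexivity. }
      intros r. unfold JH. destruct (classic (r = q)) as [->|n].
      * rewrite Hl; simpl. specialize (J3 q). unfold JH in J3. rewrite E in J3.
        destruct (HH q) as [e|[_ e]]; rewrite e; exact J3.
      * rewrite (Hr r n). specialize (J3 r). unfold JH in J3.
        destruct (pc (cL c r)); destruct (HH r) as [e|[e1 e]];
          try (rewrite e; exact J3); rewrite e1 in J3; simpl in J3; congruence.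
  -
    destruct Hst as [Hl [_ [HS [HH _]]]].
    split; [rewrite HS; exact J1|]. split; [|split; [j5 Hl|]].
    + intros r. destruct (classic (r = q)) as [->|n].
      * rewrite Hl; simpl; discriminate.
      * rewrite (Hr r n). apply J2.
    + intros r. unfold JH. rewrite HH. destruct (classic (r = q)) as [->|n].
      * rewrite Hl; simpl. specialize (J3 q). unfold JH in J3. rewrite E in J3. exact J3.
      * rewrite (Hr r n). apply J3.
  - destruct Hst as [Hl [_ [_ [HS HH]]]].
    split; [rewrite HS; exact J1|]. split; [|split; [j5 Hl|]].
    + intros r. destruct (classic (r = q)) as [->|n].
      * rewrite Hl; simpl; discriminate.
      * rewrite (Hr r n). apply J2.
    + intros r. unfold JH. rewrite HH. destruct (classic (r = q)) as [->|n].
      * rewrite Hl; simpl. specialize (J3 q). unfold JH in J3. rewrite E in J3. exact J3.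
      * rewrite (Hr r n). apply J3.
  - destruct Hst as [Hl [_ [_ [HS HH]]]].
    split; [rewrite HS; exact J1|]. split; [|split; [j5 Hl|]].
    + intros r. destruct (classic (r = q)) as [->|n].
      * rewrite Hl; simpl; discriminate.
      * rewrite (Hr r n). apply J2.
    + intros r. unfold JH. rewrite HH. destruct (classic (r = q)) as [->|n].
      * rewrite Hl; simpl. specialize (J3 q). unfold JH in J3. rewrite E in J3. exact J3.
      * rewrite (Hr r n). apply J3.
  -
    destruct Hst as [H1 [H2 [_ [_ [HS HH]]]]].
    split; [rewrite HS; exact J1|].
    assert (JQ := J3 q). unfold JH in JQ. rewrite E in JQ.
    destruct (classic (rdR (cL c q) = (fst (fst (rdA (cL c q))), VNull RES))) as [e|ne].
    + specialize (H1 e). split; [|split; [j5 H1|]].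
      * intros r. destruct (classic (r = q)) as [->|n].
        -- rewrite H1; simpl; discriminate.
        -- rewrite (Hr r n). apply J2.
      * intros r. unfold JH. rewrite HH. destruct (classic (r = q)) as [->|n].
        -- rewrite H1; simpl. exact JQ.
        -- rewrite (Hr r n). apply J3.
    + specialize (H2 ne). split; [|split; [j5 H2|]].
      * intros r. destruct (classic (r = q)) as [->|n].
        -- rewrite H2; simpl; discriminate.
        -- rewrite (Hr r n). apply J2.
      * intros r. unfold JH. rewrite HH. destruct (classic (r = q)) as [->|n].
        -- rewrite H2; simpl. exact JQ.
        -- rewrite (Hr r n). apply J3.
  - destruct Hst as [Hl [_ [_ [HS HH]]]].
    split; [rewrite HS; exact J1|]. split; [|split].
    + intros r. destruct (classic (r = q)) as [->|n].
      * rewrite Hl; simpl; discriminate.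
      * rewrite (Hr r n). apply J2.
    + intros r. destruct (classic (r = q)) as [->|n].
      * rewrite Hl; simpl. intros _. unfold apply_step.
        destruct (snd (fst (rdA (cL c q)))) as [o|]; [destruct (apply o _)|]; simpl; discriminate.
      * rewrite (Hr r n). apply J5.
    + intros r. unfold JH. rewrite HH. destruct (classic (r = q)) as [->|n].
      * rewrite Hl; simpl. specialize (J3 q). unfold JH in J3. rewrite E in J3. exact J3.
      * rewrite (Hr r n). apply J3.
  -
    destruct Hst as [Hl [_ [_ [HH HSx]]]].
    split.
    { destruct HSx as [[_ e]|[_ e]]; [|rewrite e; exact J1]. rewrite e. simpl.
      exact (J5 q E). }
    split; [|split; [j5 Hl|]].
    + intros r. destruct (classic (r = q)) as [->|n].
      * rewrite Hl; simpl; discriminate.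
      * rewrite (Hr r n). apply J2.
    + intros r. unfold JH. rewrite HH. destruct (classic (r = q)) as [->|n].
      * rewrite Hl; simpl. specialize (J3 q). unfold JH in J3. rewrite E in J3. exact J3.
      * rewrite (Hr r n). apply J3.
  - destruct Hst as [Hl [_ [HS [HH _]]]].
    split; [rewrite HS; exact J1|]. split; [|split; [j5 Hl|]].
    + intros r. destruct (classic (r = q)) as [->|n].
      * rewrite Hl; simpl; discriminate.
      * rewrite (Hr r n). apply J2.
    + intros r. unfold JH. rewrite HH. destruct (classic (r = q)) as [->|n].
      * rewrite Hl; simpl. specialize (J3 q). unfold JH in J3. rewrite E in J3. exact J3.
      * rewrite (Hr r n). apply J3.
  - destruct Hst as [Hl [_ [_ [HS HH]]]].
    split; [rewrite HS; exact J1|]. split; [|split; [j5 Hl|]].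
    + intros r. destruct (classic (r = q)) as [->|n].
      * rewrite Hl; simpl; discriminate.
      * rewrite (Hr r n). apply J2.
    + intros r. unfold JH. rewrite HH. destruct (classic (r = q)) as [->|n].
      * rewrite Hl; simpl. specialize (J3 q). unfold JH in J3. rewrite E in J3. exact J3.
      * rewrite (Hr r n). apply J3.
Qed.

Lemma inv_all ex lab : execution s0 apply ex lab -> forall i, Inv (ex i).
Proof.
  intros [Hi Hs] i. induction i.
  - destruct Hi as [_ [_ [HS [HH HL]]]].
    split; [rewrite HS; simpl; discriminate|]. split; [|split].
    + intros r. destruct (HL r) as [e _]. rewrite e; discriminate.
    + intros r. destruct (HL r) as [e _]. rewrite e; discriminate.
    + intros r. unfold JH. destruct (HL r) as [e _]. rewrite e, HH. simpl; discriminate.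
  - specialize (Hs i). destruct (lab i) as [q|].
    + eapply inv_step; eauto.
    + rewrite Hs. exact IHi.
Qed.

Lemma hchange q c c' p v : Inv c -> step apply q c c' -> cH c p = (v, VNull RES) ->
  cH c' p = (v, VNull RES) \/ exists r, cH c' p = (v, r) /\ r <> VNull RES.
Proof.
  intros [J1 [J2 [J5 J3]]] [Hoth Hst] Hp.
  cbv zeta in Hst.
  destruct (pc (cL c q)) eqn:E;
  unfold sameC, sameA, sameS, sameH in Hst;
  try (left; destruct Hst as [_ [_ [_ [_ HH]]]]; rewrite HH; exact Hp);
  try (left; destruct Hst as [_ [_ [_ [HH _]]]]; rewrite HH; exact Hp);
  try (left; destruct Hst as [_ [_ [_ [_ [_ HH]]]]]; rewrite HH; exact Hp).
  - destruct Hst as [_ [[HHq HHo] _]].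
    destruct (classic (p = q)) as [->|n].
    + specialize (J3 q). unfold JH in J3. rewrite E, Hp in J3. simpl in J3. congruence.
    + left. rewrite (HHo p n). exact Hp.
  - destruct Hst as [_ [_ [_ [_ HHx]]]].
    assert (Jr := J2 q E).
    destruct (rdS (cL c q)) as [[[ts s] rs] rp]. simpl in Jr.
    destruct rp as [|x].
    + left. rewrite HHx. exact Hp.
    + destruct HHx as [[e [u1 u2]]|[_ e]].
      * destruct (classic (p = x)) as [->|n].
        -- right. exists rs. rewrite u1. rewrite e in Hp. injection Hp as ->. auto.
        -- left. rewrite (u2 p n). exact Hp.
      * left. rewrite e. exact Hp.
Qed.

End Proof.

Theorem mainTheorem8 (P OP RES Q : Type) (s0 : Q) (apply : OP -> Q -> Q * RES)
  (ex : nat -> Config P OP RES Q) (lab : nat -> option P) :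
  execution s0 apply ex lab ->
  forall (p : P) (k v T T' : nat),
    tval ex lab p k v ->
    cH (ex T) p = (v, VNull RES) ->
    T <= T' ->
    ~ done ex lab p k T' ->
    forall i, T <= i <= T' -> cH (ex i) p = (v, VNull RES).
Proof.
  intros Hex p k v T T' Ht HT HTT Hnd i [Hi1 Hi2].
  induction i.
  - assert (T = 0) by lia. subst. exact HT.
  - destruct (Nat.eq_dec T (S i)) as [<-|ne]; [exact HT|].
    assert (IH : cH (ex i) p = (v, VNull RES)) by (apply IHi; lia).
    destruct Hex as [Hin Hs].
    assert (Hs' := Hs i). destruct (lab i) as [q|] eqn:El.
    + assert (HI : Inv P OP RES Q (ex i)) by (eapply inv_all; exact (conj Hin Hs)).
      destruct (hchange P OP RES Q apply q (ex i) (ex (S i)) p v HI Hs' IH) as [e|[r [e nr]]]; [exact e|].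
      exfalso. apply Hnd. exists v. split; [exact Ht|].
      exists (S i), r. auto.
    + rewrite Hs'. exact IH.
Qed.
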